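(* Let $\alpha>0$, $0<p<1$, $\beta_1,\beta_2,\beta_3>0$, let $V_1,V_2,V_3$ be independent with $V_i\sim EDW(\alpha,p,\beta_i)$, and let $X_1=\max\{V_1,V_3\}$, $X_2=\max\{V_2,V_3\}$. Then $X_1$ and $X_2$ are positive quadrant dependent, i.e. $P(X_1\le x_1,X_2\le x_2)\ge P(X_1\le x_1)P(X_2\le x_2)$ for all $x_1,x_2$.
   Context: The exponentiated discrete Weibull distribution $EDW(\alpha,p,\beta)$ ($\alpha,\beta>0$, $0<p<1$) is the distribution on $\mathbb{N}_0=\{0,1,2,\dots\}$ with cumulative distribution function $F_{EDW}(x;\alpha,p,\beta)=[1-p^{([x]+1)^{\alpha}}]^{\beta}$ for real $x\ge 0$, where $[x]$ is the largest integer $\le x$. *)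

(* Defs.v *)
From HB Require Import structures.
From mathcomp Require Import all_boot all_order all_algebra.
From mathcomp Require Import all_classical all_reals all_analysis.
Set Implicit Arguments. Unset Strict Implicit. Unset Printing Implicit Defensive.
Import Order.TTheory GRing.Theory Num.Theory.
Local Open Scope classical_set_scope.
Local Open Scope ring_scope.

Definition edw_cdf (R : realType) (alpha p beta : R) (x : R) : R :=
  if x < 0 then 0
  else (1 - p `^ (((Num.floor x)%:~R + 1) `^ alpha)) `^ beta.

Definition has_EDW d (T : measurableType d) (R : realType)
  (P : probability T R) (V : T -> R) (alpha p beta : R) : Prop :=
  forall x : R, P [set t | V t <= x] = (edw_cdf alpha p beta x)%:E.

(* Mutual independence of three real random variables:
   P(V1 in A1, V2 in A2, V3 in A3) = P(V1 in A1) P(V2 in A2) P(V3 in A3)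
   for all Borel sets A1, A2, A3 (taking some Ai = setT yields the
   sub-family product rules). *)
Definition indep3 d (T : measurableType d) (R : realType)
  (P : probability T R) (V1 V2 V3 : T -> R) : Prop :=
  forall A1 A2 A3 : set R, measurable A1 -> measurable A2 -> measurable A3 ->
    P (V1 @^-1` A1 `&` V2 @^-1` A2 `&` V3 @^-1` A3) =
    (P (V1 @^-1` A1) * P (V2 @^-1` A2) * P (V3 @^-1` A3))%E.

(* Main.v *)
Require Import Defs.
From HB Require Import structures.
From mathcomp Require Import all_boot all_order all_algebra.
From mathcomp Require Import all_classical all_reals all_analysis.
Import Order.TTheory GRing.Theory Num.Theory.
Local Open Scope classical_set_scope.
Local Open Scope ring_scope.

Theorem mainTheorem5 (d : measure_display) (T : measurableType d)
  (R : realType) (P : probability T R)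
  (alpha p beta1 beta2 beta3 : R)
  (V1 V2 V3 : {RV P >-> R}) :
  0 < alpha -> 0 < p -> p < 1 -> 0 < beta1 -> 0 < beta2 -> 0 < beta3 ->
  indep3 P V1 V2 V3 ->
  has_EDW P V1 alpha p beta1 ->
  has_EDW P V2 alpha p beta2 ->
  has_EDW P V3 alpha p beta3 ->
  forall x1 x2 : R,
    (P [set t | (Num.max (V1 t) (V3 t) <= x1)%R] *
     P [set t | (Num.max (V2 t) (V3 t) <= x2)%R] <=
     P ([set t | (Num.max (V1 t) (V3 t) <= x1)%R] `&`
        [set t | (Num.max (V2 t) (V3 t) <= x2)%R]))%E.
Proof.
move=> _ _ _ _ _ _ ind _ _ _ x1 x2.
set I := fun x : R => [set` `]-oo, x]].
have mI : forall x, measurable (I x) by move=> x; exact: measurable_itv.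
have PT : forall V : {RV P >-> R}, P (V @^-1` setT) = 1%E.
  by move=> V; rewrite preimage_setT probability_setT.
have E13 : forall A1 A3, measurable A1 -> measurable A3 ->
    P (V1 @^-1` A1 `&` V3 @^-1` A3) = (P (V1 @^-1` A1) * P (V3 @^-1` A3))%E.
  move=> A1 A3 m1 m3; have := ind A1 setT A3 m1 measurableT m3.
  by rewrite PT mule1 preimage_setT setIT.
have E23 : forall A2 A3, measurable A2 -> measurable A3 ->
    P (V2 @^-1` A2 `&` V3 @^-1` A3) = (P (V2 @^-1` A2) * P (V3 @^-1` A3))%E.
  move=> A2 A3 m2 m3; have := ind setT A2 A3 measurableT m2 m3.
  by rewrite PT mul1e preimage_setT setTI.
have eA : [set t | (Num.max (V1 t) (V3 t) <= x1)%R] =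
    V1 @^-1` I x1 `&` V3 @^-1` I x1.
  by apply/seteqP; split => t /=; rewrite /I /= !in_itv /= ge_max => /andP.
have eB : [set t | (Num.max (V2 t) (V3 t) <= x2)%R] =
    V2 @^-1` I x2 `&` V3 @^-1` I x2.
  by apply/seteqP; split => t /=; rewrite /I /= !in_itv /= ge_max => /andP.
have eAB : [set t | (Num.max (V1 t) (V3 t) <= x1)%R] `&`
        [set t | (Num.max (V2 t) (V3 t) <= x2)%R] =
    V1 @^-1` I x1 `&` V2 @^-1` I x2 `&` V3 @^-1` I (Num.min x1 x2).
  apply/seteqP; split => t /=; rewrite /I /= !in_itv /= !ge_max le_min.
    by move=> [/andP[-> ->] /andP[-> ->]].
  by move=> [[-> ->] /andP[-> ->]].
rewrite eAB eA eB ind // E13 // E23 //.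
set a := P (V1 @^-1` I x1); set b := P (V2 @^-1` I x2).
set c1 := P (V3 @^-1` I x1); set c2 := P (V3 @^-1` I x2).
have ge0 : forall x, (0 <= P (V3 @^-1` I x))%E by move=> x; exact: measure_ge0.
have le1 : forall x, (P (V3 @^-1` I x) <= 1)%E.
  move=> x; apply: probability_le1; exact: measurable_funPTI.
have a0 : (0 <= a)%E by exact: measure_ge0.
have b0 : (0 <= b)%E by exact: measure_ge0.
have m0 : (0 <= a * b)%E by exact: mule_ge0.
have [le12|lt21] := leP x1 x2.
- rewrite -/c1 muleACA muleA -[X in (_ <= X)%E]mule1.
  apply: lee_wpmul2l; [apply: mule_ge0 => //; exact: ge0 | exact: le1].
- rewrite -/c2 muleACA [(c1 * c2)%E]muleC muleA -[X in (_ <= X)%E]mule1.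
  apply: lee_wpmul2l; [apply: mule_ge0 => //; exact: ge0 | exact: le1].
Qed.
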